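(* For $s\in\mu_r$, $v\in\mathcal{A}_1$, $w\in\mathcal{A}_r$: \[ vz\diamond_s w=v\diamond_s wz=(v\diamond_s w)z . \]
   Context: Fix $r\ge1$, $\mu_r$ the $r$th roots of unity, $\mathcal{A}_r=\mathbb{Q}\langle x,y_s\mid s\in\mu_r\rangle$ the free noncommutative polynomial algebra over $\mathbb{Q}$, $\mathcal{A}_1=\mathbb{Q}\langle x,y\rangle$ with $y=y_1$. Write $z=x+y_1$, $z_s=x+y_s$, $\delta(1)=0$, $\delta(s)=1$ ($s\ne1$), $z_s^\delta=x+\delta(s)y_s$, $z_{k,s}=x^{k-1}y_s$. Let $\varphi$ be the algebra automorphism of $\mathcal{A}_r$ with $\varphi(x)=z$, $\varphi(y_s)=\delta(s)y_s-y_1$. Every word is uniquely $z_{k_1,s_1}\cdots z_{k_l,s_l}x^a$ ($l,a\ge0$); define linear maps $\mathcal{I}(z_{k_1,s_1}\cdots z_{k_l,s_l}x^a)=z_{k_1,s_1}z_{k_2,s_1s_2}\cdots z_{k_l,s_1\cdots s_l}x^a$ and $M_s(z_{k_1,s_1}\cdots z_{k_l,s_l}x^a)=z_{k_1,ss_1}z_{k_2,s_2}\cdots z_{k_l,s_l}x^a$ (with $M_s(x^a)=x^a$), and $\psi_s=\varphi\circ\mathcal{I}\circ M_s$. Diamond product: for $s\in\mu_r$, $\diamond_s:\mathcal{A}_1\times\mathcal{A}_r\to\mathcal{A}_r$ is the $\mathbb{Q}$-bilinear map defined recursively on words by $1\diamond_s w=w$, $v\diamond_s1=\psi_s\varphi(v)$,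 and for $v\in\mathcal{A}_1$, $w\in\mathcal{A}_r$, $1\ne t\in\mu_r$: $vx\diamond_s wx=(v\diamond_s wx)x-(vy\diamond_s w)x$; $vy\diamond_s wx=(v\diamond_s wx)y+(vy\diamond_s w)x$; $vx\diamond_s wy=(v\diamond_s wy)x+(vx\diamond_s w)y$; $vy\diamond_s wy=(v\diamond_s wy)y-(vx\diamond_s w)y$; $vx\diamond_s wy_t=(v\diamond_s wy_t)x+(v\diamond_s wz_t)y_t-(vy\diamond_s w)y_t$; $vy\diamond_s wy_t=(v\diamond_s wy_t)y-(v\diamond_s wz_t)y_t+(vy\diamond_s w)y_t$. *)

(* Defs.v *)
From mathcomp Require Import all_boot all_algebra.
Set Implicit Arguments. Unset Strict Implicit. Unset Printing Implicit Defensive.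
Import GRing.Theory.
Local Open Scope ring_scope.

(* Roots of unity.  We fix r = n.+1 >= 1 and identify the cyclic group     *)
(* mu_r with Z/rZ = 'I_n.+1 via zeta^k <-> k, where zeta = exp(2 pi i/r).  *)
(* Multiplication in mu_r is addition in 'I_n.+1, and 1 in mu_r is 0.     *)
Definition mu (n : nat) := 'I_n.+1.
Definition mu_mul n (s t : mu n) : mu n := (s + t)%R.
Definition mu_one n : mu n := 0%R.
Definition delta n (s : mu n) : rat := if s == mu_one n then 0 else 1.

(* Letters of A_r: None = x, Some s = y_s.  Letters of A_1: false = x,    *)
(* true = y (= y_1).                                                      *)
Definition letterR n := option (mu n).
Definition letter1 := bool.

(* Elements of Q<L> are represented as formal finite linear combinations  *)
(* of words (lists of (coefficient, word)); two representations denote   *)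
(* the same element iff they have the same coefficient on every word.     *)
Definition ncpoly (L : Type) := seq (rat * seq L).

Definition coef (L : eqType) (p : ncpoly L) (w : seq L) : rat :=
  \sum_(a <- p | a.2 == w) a.1.
Definition peq (L : eqType) (p q : ncpoly L) : Prop :=
  forall w, coef p w = coef q w.

Definition pword L (w : seq L) : ncpoly L := [:: (1, w)].
Definition pone L : ncpoly L := pword [::].
Definition padd L (p q : ncpoly L) : ncpoly L := p ++ q.
Definition pscale L (c : rat) (p : ncpoly L) : ncpoly L :=
  [seq (c * a.1, a.2) | a <- p].
Definition psub L (p q : ncpoly L) : ncpoly L := padd p (pscale (-1) q).
Definition pmul L (p q : ncpoly L) : ncpoly L :=
  [seq (a.1 * b.1, a.2 ++ b.2) | a <- p, b <- q].
Definition plin L L' (f : seq L -> ncpoly L') (p : ncpoly L) : ncpoly L' :=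
  flatten [seq pscale a.1 (f a.2) | a <- p].

Definition lx n : letterR n := None.
Definition ly n (s : mu n) : letterR n := Some s.

Definition zR n : ncpoly (letterR n) := padd (pword [:: lx n]) (pword [:: ly (mu_one n)]).
Definition zt n (t : mu n) : ncpoly (letterR n) := padd (pword [:: lx n]) (pword [:: ly t]).
Definition z1 : ncpoly letter1 := padd (pword [:: false]) (pword [:: true]).

Definition emb1 n (b : letter1) : letterR n := if b then ly (mu_one n) else lx n.
Definition pemb n (p : ncpoly letter1) : ncpoly (letterR n) :=
  [seq (a.1, map (@emb1 n) a.2) | a <- p].

Definition phi_letter n (l : letterR n) : ncpoly (letterR n) :=
  match l with
  | None => zR n
  | Some s => psub (pscale (delta s) (pword [:: ly s])) (pword [:: ly (mu_one n)])
  end.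
Definition phi_word n (w : seq (letterR n)) : ncpoly (letterR n) :=
  foldr (fun l acc => pmul (phi_letter l) acc) (@pone _) w.
Definition phi n (p : ncpoly (letterR n)) : ncpoly (letterR n) := plin (@phi_word n) p.

(* I on words: y_{s_j} |-> y_{s_1 ... s_j} *)
Fixpoint I_word n (acc : mu n) (w : seq (letterR n)) : seq (letterR n) :=
  match w with
  | [::] => [::]
  | None :: w' => None :: I_word acc w'
  | Some t :: w' => Some (mu_mul acc t) :: I_word (mu_mul acc t) w'
  end.
Fixpoint M_word n (s : mu n) (w : seq (letterR n)) : seq (letterR n) :=
  match w with
  | [::] => [::]
  | None :: w' => None :: M_word s w'
  | Some t :: w' => Some (mu_mul s t) :: w'
  end.
Definition psi_word n (s : mu n) (w : seq (letterR n)) : ncpoly (letterR n) :=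
  phi_word (I_word (mu_one n) (M_word s w)).
Definition psi n (s : mu n) (p : ncpoly (letterR n)) : ncpoly (letterR n) :=
  plin (psi_word s) p.

(* The diamond product on words, by recursion on k = |v| + |w|          *)
(* (k is fuel; it is always called with k = size v + size w).           *)
Fixpoint dia_fuel n (s : mu n) (k : nat) (v : seq letter1) (w : seq (letterR n))
  {struct k} : ncpoly (letterR n) :=
  if v is [::] then pword w else
  if w is [::] then psi s (phi (pemb n (pword v))) else
  match k with
  | 0 => [::]
  | k'.+1 =>
    match rev v, rev w with
    | b :: rv0, l :: rw0 =>
      let v0 := rev rv0 in let w0 := rev rw0 in
      let X := pword [:: lx n] in let Y := pword [:: ly (mu_one n)] in
      match b, l with
      | false, None => (* vx <> wx = (v <> wx)x - (vy <> w)x *)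
          psub (pmul (dia_fuel s k' v0 w) X) (pmul (dia_fuel s k' (rcons v0 true) w0) X)
      | true, None => (* vy <> wx = (v <> wx)y + (vy <> w)x *)
          padd (pmul (dia_fuel s k' v0 w) Y) (pmul (dia_fuel s k' (rcons v0 true) w0) X)
      | false, Some t =>
          if t == mu_one n then (* vx <> wy = (v <> wy)x + (vx <> w)y *)
            padd (pmul (dia_fuel s k' v0 w) X) (pmul (dia_fuel s k' (rcons v0 false) w0) Y)
          else (* vx <> wy_t = (v <> wy_t)x + (v <> wz_t)y_t - (vy <> w)y_t *)
            let Yt := pword [:: ly t] in
            psub (padd (pmul (dia_fuel s k' v0 w) X)
                       (pmul (padd (dia_fuel s k' v0 (rcons w0 (lx n)))
                                   (dia_fuel s k' v0 (rcons w0 (ly t)))) Yt))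
                 (pmul (dia_fuel s k' (rcons v0 true) w0) Yt)
      | true, Some t =>
          if t == mu_one n then (* vy <> wy = (v <> wy)y - (vx <> w)y *)
            psub (pmul (dia_fuel s k' v0 w) Y) (pmul (dia_fuel s k' (rcons v0 false) w0) Y)
          else (* vy <> wy_t = (v <> wy_t)y - (v <> wz_t)y_t + (vy <> w)y_t *)
            let Yt := pword [:: ly t] in
            padd (psub (pmul (dia_fuel s k' v0 w) Y)
                       (pmul (padd (dia_fuel s k' v0 (rcons w0 (lx n)))
                                   (dia_fuel s k' v0 (rcons w0 (ly t)))) Yt))
                 (pmul (dia_fuel s k' (rcons v0 true) w0) Yt)
      end
    | _, _ => [::]
    end
  end.

Definition dia_word n (s : mu n) (v : seq letter1) (w : seq (letterR n)) :=
  dia_fuel s (size v + size w) v w.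

Definition diamond n (s : mu n) (p : ncpoly letter1) (q : ncpoly (letterR n))
  : ncpoly (letterR n) :=
  flatten [seq pscale (a.1 * b.1) (dia_word s a.2 b.2) | a <- p, b <- q].

(* Main.v *)
Require Import Defs.
From mathcomp Require Import all_boot all_algebra.
From mathcomp Require Import ring lra.
Set Implicit Arguments. Unset Strict Implicit. Unset Printing Implicit Defensive.
Import GRing.Theory.
Local Open Scope ring_scope.

Definition lsum (L : Type) (g : seq L -> rat) (p : ncpoly L) : rat :=
  \sum_(a <- p) a.1 * g a.2.

Section Lsum.
Variable L : Type.
Implicit Types (g : seq L -> rat) (p q : ncpoly L).

Lemma lsum_nil g : lsum g [::] = 0. Proof. by rewrite /lsum big_nil. Qed.
Lemma lsum_cons g a p : lsum g (a :: p) = a.1 * g a.2 + lsum g p.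
Proof. by rewrite /lsum big_cons. Qed.
Lemma lsum_cat g p q : lsum g (p ++ q) = lsum g p + lsum g q.
Proof. by rewrite /lsum big_cat. Qed.
Lemma lsum_padd g p q : lsum g (padd p q) = lsum g p + lsum g q.
Proof. exact: lsum_cat. Qed.
Lemma lsum_pscale g c p : lsum g (pscale c p) = c * lsum g p.
Proof. rewrite /lsum big_map mulr_sumr; apply: eq_bigr => a _ /=; ring. Qed.
Lemma lsum_psub g p q : lsum g (psub p q) = lsum g p - lsum g q.
Proof. rewrite /psub lsum_padd lsum_pscale; ring. Qed.
Lemma lsum_pword g w : lsum g (pword w) = g w.
Proof. rewrite /pword lsum_cons lsum_nil /=; ring. Qed.
Lemma lsum_pone g : lsum g (@pone L) = g [::].
Proof. exact: lsum_pword. Qed.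
Lemma eq_lsum g g' p : (forall x, g x = g' x) -> lsum g p = lsum g' p.
Proof. by move=> h; apply: eq_bigr => a _; rewrite h. Qed.
Lemma lsumD g g' p : lsum (fun x => g x + g' x) p = lsum g p + lsum g' p.
Proof. rewrite /lsum -big_split; apply: eq_bigr => a _ /=; ring. Qed.
Lemma lsumB g g' p : lsum (fun x => g x - g' x) p = lsum g p - lsum g' p.
Proof. rewrite /lsum -sumrB; apply: eq_bigr => a _ /=; ring. Qed.
Lemma lsum_pmul g p q :
  lsum g (pmul p q) = lsum (fun x => lsum (fun y => g (x ++ y)) q) p.
Proof.
rewrite /lsum /pmul big_flatten big_map; apply: eq_bigr => a _.
rewrite big_map mulr_sumr; apply: eq_bigr => b _ /=; ring.
Qed.

Lemma lsum_pmul_w g p w : lsum g (pmul p (pword w)) = lsum (fun x => g (x ++ w)) p.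
Proof. by rewrite lsum_pmul; apply: eq_lsum => x; rewrite lsum_pword. Qed.
End Lsum.

Lemma lsum_plin L L' (f : seq L -> ncpoly L') (g : seq L' -> rat) (p : ncpoly L) :
  lsum g (plin f p) = lsum (fun x => lsum g (f x)) p.
Proof.
rewrite /plin {1}/lsum big_flatten big_map; apply: eq_bigr => a _.
exact: (lsum_pscale g a.1 (f a.2)).
Qed.

Section Peq.
Variable L : eqType.
Implicit Types (g : seq L -> rat) (p q : ncpoly L).

Lemma coef_lsum p u : coef p u = lsum (fun x => (x == u)%:R) p.
Proof.
rewrite /coef /lsum big_mkcond; apply: eq_bigr => a _ /=.
by case: eqP => _; rewrite ?mulr1 ?mulr0.
Qed.

Lemma sum_delta (S : seq (seq L)) a (F : seq L -> rat) :
  uniq S -> a \in S -> \sum_(u <- S) (a == u)%:R * F u = F a.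
Proof.
elim: S => [//|b S IH] /= /andP [bS uS]; rewrite in_cons big_cons.
case: eqP => [ab _|ne /= aS]; last by rewrite IH // mul0r add0r.
rewrite -ab in bS *.
rewrite mul1r big1_seq ?addr0 // => u /andP [_ uS'].
by case: eqP => [eau|]; [move: bS; rewrite eau uS' | rewrite mul0r].
Qed.

Lemma lsum_keys g p (S : seq (seq L)) :
  uniq S -> {subset map snd p <= S} ->
  lsum g p = \sum_(u <- S) coef p u * g u.
Proof.
move=> uS; elim: p => [|a p IH] sub.
  by rewrite lsum_nil big1 // => u _; rewrite /coef big_nil mul0r.
rewrite lsum_cons IH; last by move=> x xp; apply: sub; rewrite map_cons in_cons; apply/orP; right.
have aS : a.2 \in S by apply: sub; rewrite map_cons in_cons eqxx.
rewrite -(sum_delta (fun u => a.1 * g u) uS aS) -big_split; apply: eq_bigr => u _ /=.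
rewrite /coef big_cons; case: eqP => _ /=; ring.
Qed.

Lemma peqP p q : peq p q <-> forall g, lsum g p = lsum g q.
Proof.
split=> [h g|h u]; last by rewrite !coef_lsum h.
pose S := undup (map snd (p ++ q)).
have uS : uniq S := undup_uniq _.
have sp : {subset map snd p <= S}.
  by move=> x xp; rewrite mem_undup map_cat mem_cat; apply/orP; left.
have sq : {subset map snd q <= S}.
  by move=> x xq; rewrite mem_undup map_cat mem_cat; apply/orP; right.
rewrite (lsum_keys g uS sp) (lsum_keys g uS sq).
by apply: eq_bigr => u _; rewrite h.
Qed.

Lemma lsum_peq g p q : peq p q -> lsum g p = lsum g q.
Proof. by move/peqP. Qed.
End Peq.
Section Dia.
Variables (n : nat) (s : mu n).
Local Notation D := (dia_word s).
Local Notation X := (pword [:: lx n]).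
Local Notation Y := (pword [:: ly (mu_one n)]).

Lemma dia_fuel_step k v w b l :
  dia_fuel s k.+1 (rcons v b) (rcons w l) =
  match b, l with
  | false, None => psub (pmul (dia_fuel s k v (rcons w l)) X) (pmul (dia_fuel s k (rcons v true) w) X)
  | true, None => padd (pmul (dia_fuel s k v (rcons w l)) Y) (pmul (dia_fuel s k (rcons v true) w) X)
  | false, Some t =>
      if t == mu_one n then
        padd (pmul (dia_fuel s k v (rcons w l)) X) (pmul (dia_fuel s k (rcons v false) w) Y)
      else
        psub (padd (pmul (dia_fuel s k v (rcons w l)) X)
                   (pmul (padd (dia_fuel s k v (rcons w (lx n))) (dia_fuel s k v (rcons w (ly t)))) (pword [:: ly t])))
             (pmul (dia_fuel s k (rcons v true) w) (pword [:: ly t]))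
  | true, Some t =>
      if t == mu_one n then
        psub (pmul (dia_fuel s k v (rcons w l)) Y) (pmul (dia_fuel s k (rcons v false) w) Y)
      else
        padd (psub (pmul (dia_fuel s k v (rcons w l)) Y)
                   (pmul (padd (dia_fuel s k v (rcons w (lx n))) (dia_fuel s k v (rcons w (ly t)))) (pword [:: ly t])))
             (pmul (dia_fuel s k (rcons v true) w) (pword [:: ly t]))
  end.
Proof.
have [a [v1 Ev]] : exists a v1, rcons v b = a :: v1.
  by case: v => [|a v1]; [exists b, [::] | exists a, (rcons v1 b)].
have [c [w1 Ew]] : exists c w1, rcons w l = c :: w1.
  by case: w => [|c w1]; [exists l, [::] | exists c, (rcons w1 l)].
rewrite {1}Ev {1}Ew /= -Ev -Ew !rev_rcons /= !revK. reflexivity.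
Qed.

Lemma dia_step v w b l :
  D (rcons v b) (rcons w l) =
  match b, l with
  | false, None => psub (pmul (D v (rcons w l)) X) (pmul (D (rcons v true) w) X)
  | true, None => padd (pmul (D v (rcons w l)) Y) (pmul (D (rcons v true) w) X)
  | false, Some t =>
      if t == mu_one n then
        padd (pmul (D v (rcons w l)) X) (pmul (D (rcons v false) w) Y)
      else
        psub (padd (pmul (D v (rcons w l)) X)
                   (pmul (padd (D v (rcons w (lx n))) (D v (rcons w (ly t)))) (pword [:: ly t])))
             (pmul (D (rcons v true) w) (pword [:: ly t]))
  | true, Some t =>
      if t == mu_one n then
        psub (pmul (D v (rcons w l)) Y) (pmul (D (rcons v false) w) Y)
      else
        padd (psub (pmul (D v (rcons w l)) Y)
                   (pmul (padd (D v (rcons w (lx n))) (D v (rcons w (ly t)))) (pword [:: ly t])))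
             (pmul (D (rcons v true) w) (pword [:: ly t]))
  end.
Proof.
rewrite /dia_word !size_rcons addSn addnS dia_fuel_step.
by case: b; case: l => [t|]; rewrite ?size_rcons ?addSn ?addnS.
Qed.

Lemma dia_nil_l w : D [::] w = pword w.
Proof. by rewrite /dia_word; case: w. Qed.

Lemma dia_nil_r v : v != [::] -> D v [::] = psi s (phi (pemb n (pword v))).
Proof. by case: v => [|a v] // _; rewrite /dia_word addn0. Qed.

Lemma phi_word_nil : @phi_word n [::] = @pone (letterR n). Proof. by []. Qed.
Lemma phi_word_cons (a : letterR n) u : phi_word (a :: u) = pmul (phi_letter a) (phi_word u).
Proof. by []. Qed.

Lemma phi_rcons (h : seq (letterR n) -> rat) u l :
  lsum h (phi_word (rcons u l)) =
  lsum (fun x => lsum (fun y => h (x ++ y)) (phi_letter l)) (phi_word u).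
Proof.
elim: u h => [|a u IH] h; rewrite ?rcons_cons !phi_word_cons ?phi_word_nil.
  rewrite lsum_pmul lsum_pone; apply: eq_lsum => x; by rewrite lsum_pone cats0.
rewrite !lsum_pmul; apply: eq_lsum => x; rewrite IH.
apply: eq_lsum => y; apply: eq_lsum => z; by rewrite catA.
Qed.

Lemma phi_letter_sum (F : seq (letterR n) -> rat) :
  lsum F (phi_letter (lx n)) + lsum F (phi_letter (ly (mu_one n))) = F [:: lx n].
Proof.
have -> : phi_letter (lx n) = zR n by [].
have -> : phi_letter (ly (mu_one n)) = psub (pscale (delta (mu_one n)) (pword [:: ly (mu_one n)])) (pword [:: ly (mu_one n)]) by [].
rewrite /zR lsum_padd lsum_psub lsum_pscale !lsum_pword /delta eqxx; ring.
Qed.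

Lemma M_rcons u : M_word s (rcons u (lx n)) = rcons (M_word s u) (lx n).
Proof. by elim: u => [|[t|] u IH] //=; rewrite IH. Qed.

Lemma I_rcons acc u : I_word acc (rcons u (lx n)) = rcons (I_word acc u) (lx n).
Proof. by elim: u acc => [|[t|] u IH] acc //=; rewrite IH. Qed.

Lemma psi_word_rcons (h : seq (letterR n) -> rat) x :
  lsum h (psi_word s (x ++ [:: lx n])) =
  lsum (fun y => h (y ++ [:: lx n])) (psi_word s x) +
  lsum (fun y => h (y ++ [:: ly (mu_one n)])) (psi_word s x).
Proof.
rewrite /psi_word cats1 M_rcons I_rcons phi_rcons -lsumD; apply: eq_lsum => y.
have -> : phi_letter (lx n) = zR n by [].
by rewrite /zR lsum_padd !lsum_pword.
Qed.

Definition PP (u : seq (letterR n)) := psi s (phi (pword u)).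

Lemma lsum_PP h u : lsum h (PP u) = lsum (fun x => lsum h (psi_word s x)) (phi_word u).
Proof. by rewrite /PP lsum_plin lsum_plin lsum_pword. Qed.

Lemma dia_nil_r' h v : lsum h (D v [::]) = lsum h (PP (map (@emb1 n) v)).
Proof.
case: v => [|a v].
  rewrite dia_nil_l lsum_PP lsum_pword.
  by [].
by rewrite dia_nil_r.
Qed.

Lemma dia_A v w g :
  lsum g (D (rcons v false) w) + lsum g (D (rcons v true) w) =
  lsum (fun x => g (x ++ [:: lx n])) (D v w) +
  lsum (fun x => g (x ++ [:: ly (mu_one n)])) (D v w).
Proof.
case/lastP: w => [|w l].
  rewrite !dia_nil_r' !map_rcons !lsum_PP.
  have -> : emb1 n false = lx n by [].
  have -> : emb1 n true = ly (mu_one n) by [].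
  rewrite !phi_rcons -!lsumD.
  apply: eq_lsum => x.
  rewrite phi_letter_sum; exact: psi_word_rcons.
rewrite !dia_step; case: l => [t|]; first case: ifP => _;
  rewrite !(lsum_psub, lsum_padd, lsum_pmul_w); ring.
Qed.

Lemma dia_step_x v w b : D (rcons v b) (rcons w (lx n)) =
  if b then padd (pmul (D v (rcons w (lx n))) Y) (pmul (D (rcons v true) w) X)
  else psub (pmul (D v (rcons w (lx n))) X) (pmul (D (rcons v true) w) X).
Proof. exact: dia_step. Qed.

Lemma dia_step_y v w b : D (rcons v b) (rcons w (ly (mu_one n))) =
  if b then psub (pmul (D v (rcons w (ly (mu_one n)))) Y) (pmul (D (rcons v false) w) Y)
  else padd (pmul (D v (rcons w (ly (mu_one n)))) X) (pmul (D (rcons v false) w) Y).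
Proof. by rewrite dia_step /=. Qed.

Lemma dia_B v w g :
  lsum g (D v (rcons w (lx n))) + lsum g (D v (rcons w (ly (mu_one n)))) =
  lsum (fun x => g (x ++ [:: lx n])) (D v w) +
  lsum (fun x => g (x ++ [:: ly (mu_one n)])) (D v w).
Proof.
elim/last_ind: v g => [|v b IH] g.
  by rewrite !dia_nil_l !lsum_pword !cats1.
rewrite dia_step_x dia_step_y.
have I1 := IH (fun x => g (x ++ [:: lx n])).
have I2 := IH (fun x => g (x ++ [:: ly (mu_one n)])).
have A1 := dia_A v w (fun x => g (x ++ [:: lx n])).
have A2 := dia_A v w (fun x => g (x ++ [:: ly (mu_one n)])).
cbv beta in I1, I2, A1, A2.
case: b; rewrite !(lsum_psub, lsum_padd, lsum_pmul_w); lra.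
Qed.
End Dia.
Lemma lsum_diamond n (s : mu n) g p q :
  lsum g (diamond s p q) = lsum (fun x => lsum (fun y => lsum g (dia_word s x y)) q) p.
Proof.
rewrite /diamond {1}/lsum big_flatten big_flatten big_map /lsum.
apply: eq_bigr => a _; rewrite big_map mulr_sumr; apply: eq_bigr => b _.
rewrite -/(lsum g (pscale (a.1 * b.1) (dia_word s a.2 b.2))) lsum_pscale.
by rewrite mulrA.
Qed.

Lemma lsum_pmul_z1 (F : seq letter1 -> rat) (p : ncpoly letter1) :
  lsum F (pmul p z1) = lsum (fun x => F (x ++ [:: false])) p + lsum (fun x => F (x ++ [:: true])) p.
Proof.
rewrite lsum_pmul -lsumD; apply: eq_lsum => x.
by rewrite /z1 lsum_padd !lsum_pword.
Qed.

Lemma lsum_pmul_zR n (F : seq (letterR n) -> rat) p :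
  lsum F (pmul p (zR n)) = lsum (fun x => F (x ++ [:: lx n])) p + lsum (fun x => F (x ++ [:: ly (mu_one n)])) p.
Proof.
rewrite lsum_pmul -lsumD; apply: eq_lsum => x.
by rewrite /zR lsum_padd !lsum_pword.
Qed.

Theorem mainTheorem7 (n : nat) (s : mu n) (v : ncpoly letter1) (w : ncpoly (letterR n)) :
  peq (diamond s (pmul v z1) w) (diamond s v (pmul w (zR n))) /\
  peq (diamond s v (pmul w (zR n))) (pmul (diamond s v w) (zR n)).
Proof.
split; apply/peqP => g.
  rewrite !lsum_diamond lsum_pmul_z1 -lsumD; apply: eq_lsum => x.
  rewrite lsum_pmul_zR -!lsumD; apply: eq_lsum => y.
  by rewrite !cats1 dia_A dia_B.
rewrite lsum_pmul_zR !lsum_diamond -lsumD; apply: eq_lsum => x.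
rewrite lsum_pmul_zR -!lsumD; apply: eq_lsum => y.
by rewrite !cats1 dia_B.
Qed.
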